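(* Let $K\ge 3$, $d\in\mathbb{N}$, $\eta>0$, and for each $k\in[K]=\{1,\dots,K\}$ let $n_k\in\mathbb{N}$ and points $x^k_1,\dots,x^k_{n_k}\in\mathbb{R}^d$ be given. Indices of marginals are taken cyclically: $K+1$ means $1$ and $0$ means $K$. For $\ell,t\in[K]$ define $\mathcal{K}^{(\ell,t)}\in\mathbb{R}^{n_\ell\times n_t}$ by $\mathcal{K}^{(\ell,t)}_{i,j}=\exp\!\big(-\tfrac1\eta\|x^\ell_i-x^t_j\|_2^2\big)$. Let $\mathcal{K}\in\mathbb{R}^{n_1\times\cdots\times n_K}$ be given by $\mathcal{K}_{i_1,\dots,i_K}=\exp\!\big(-\tfrac1\eta\sum_{k=1}^{K}\|x^k_{i_k}-x^{k+1}_{i_{k+1}}\|_2^2\big)=\prod_{k=1}^K\mathcal{K}^{(k,k+1)}_{i_k,i_{k+1}}$, let $\phi^k\in\mathbb{R}^{n_k}$, $k\in[K]$, be arbitrary vectors and $\Phi_{i_1,\dots,i_K}=\prod_{k=1}^K\phi^k_{i_k}$. For distinct $\ell,t\in[K]$ let $d(\ell,t)=t-\ell$ if $t\ge\ell$ and $d(\ell,t)=K-\ell+t$ otherwise, and define $\alpha^{(\ell,t)}\in\mathbb{R}^{n_\ell\times n_t}$ recursively by $\alpha^{(\ell,t)}=\mathcal{K}^{(\ell,t)}$ if $d(\ell,t)=1$ and $\alpha^{(\ell,t)}=\mathcal{K}^{(\ell,\ell+1)}\big(\phi^{\ell+1}\odot\alpha^{(\ell+1,t)}\big)$ otherwise.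 Define $\lambda^{(1,k)}\in\mathbb{R}^{n_1\times n_k}$ for $k=2,\dots,K$ by $\lambda^{(1,2)}=\mathcal{K}^{(1,2)}$ and $\lambda^{(1,k)}=\lambda^{(1,k-1)}\big(\phi^{k-1}\odot\mathcal{K}^{(k-1,k)}\big)$ for $k=3,\dots,K$. Then $$P_k(\mathcal{K}\odot\Phi)=\begin{cases}\phi^1\odot\big\langle\mathcal{K}^{(1,2)},\big(\phi^2\odot\alpha^{(2,1)}\big)^{\intercal}\big\rangle, & k=1,\\[2pt] \phi^k\odot\big\langle\alpha^{(k,1)},\big(\phi^1\odot\lambda^{(1,k)}\big)^{\intercal}\big\rangle, & k=2,\dots,K.\end{cases}$$
   Context: $P_k$ denotes the $k$-th marginal projection of a tensor $T\in\mathbb{R}^{n_1\times\cdots\times n_K}$: $[P_k(T)]_{i}=\sum T_{i_1,\dots,i_K}$, the sum over all $i_\ell\in[n_\ell]$, $\ell\neq k$, with $i_k=i$ fixed. $\odot$ between tensors of equal size (and between vectors) is the entrywise product; for a vector $v\in\mathbb{R}^n$ and a matrix $A\in\mathbb{R}^{n\times m}$, $v\odot A$ is the matrix with entries $v_iA_{ij}$. For matrices $G,H\in\mathbb{R}^{n\times m}$, $\langle G,H\rangle\in\mathbb{R}^n$ denotes the inner product along the second dimension: $\langle G,H\rangle_i=\sum_{j=1}^m G_{ij}H_{ij}$. *)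

(* Defs.v *)
From HB Require Import structures.
From mathcomp Require Import all_boot all_order all_algebra.
From mathcomp Require Import reals.
From mathcomp Require Import sequences exp.
Set Implicit Arguments. Unset Strict Implicit. Unset Printing Implicit Defensive.
Import Order.TTheory GRing.Theory Num.Theory.
Local Open Scope ring_scope.

(* Marginals are indexed 0-based by 'I_K; the paper's marginal j corresponds
   to the ordinal j-1.  Cyclic successor / predecessor are ordS / ord_pred. *)
Section Defs.
Variables (R : realType) (K d : nat) (eta : R) (n : 'I_K -> nat).
Variable x : forall k : 'I_K, 'I_(n k) -> 'rV[R]_d.
Variable phi : forall k : 'I_K, 'I_(n k) -> R.

Definition sqdist (u v : 'rV[R]_d) : R := \sum_(c < d) (u 0 c - v 0 c) ^+ 2.

Definition Kmat (l t : 'I_K) : 'M[R]_(n l, n t) :=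
  \matrix_(i, j) expR (- (1 / eta) * sqdist (@x l i) (@x t j)).

Definition rowscale (m p : nat) (v : 'I_m -> R) (A : 'M[R]_(m, p)) : 'M[R]_(m, p) :=
  \matrix_(i, j) (v i * A i j).

Definition inner_rows (m p : nat) (G H : 'M[R]_(m, p)) (i : 'I_m) : R :=
  \sum_(j < p) G i j * H i j.

Definition cdist (l t : 'I_K) : nat :=
  if (l <= t)%N then (t - l)%N else (K - l + t)%N.

Fixpoint alphaF (m : nat) (l t : 'I_K) : 'M[R]_(n l, n t) :=
  match m with
  | m1.+1 => if m1 is _.+1
             then Kmat l (ordS l) *m rowscale (@phi (ordS l)) (alphaF m1 (ordS l) t)
             else Kmat l t
  | 0%N => Kmat l t
  end.
Definition alpha (l t : 'I_K) : 'M[R]_(n l, n t) := alphaF (cdist l t) l t.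

Fixpoint lambdaF (m : nat) (s t : 'I_K) : 'M[R]_(n s, n t) :=
  match m with
  | m1.+1 => if m1 is _.+1
             then lambdaF m1 s (ord_pred t) *m
                  rowscale (@phi (ord_pred t)) (Kmat (ord_pred t) t)
             else Kmat s t
  | 0%N => Kmat s t
  end.
Definition lambda (s t : 'I_K) : 'M[R]_(n s, n t) := lambdaF (cdist s t) s t.

Definition midx := {dffun forall k : 'I_K, 'I_(n k)}.

Definition Ktens (I : midx) : R :=
  expR (- (1 / eta) * \sum_(k < K) sqdist (@x k (I k)) (@x (ordS k) (I (ordS k)))).

Definition Phitens (I : midx) : R := \prod_(k < K) @phi k (I k).

Definition marg (T : midx -> R) (k : 'I_K) (i : 'I_(n k)) : R :=
  \sum_(I : midx | I k == i) T I.

End Defs.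
Arguments marg [R K n] T k i.

(* Main.v *)
Require Import Defs.
From HB Require Import structures.
From mathcomp Require Import all_boot all_order all_algebra.
From mathcomp Require Import reals.
From mathcomp Require Import sequences exp.
From mathcomp Require Import zify ring.
Set Implicit Arguments. Unset Strict Implicit. Unset Printing Implicit Defensive.
Import Order.TTheory GRing.Theory Num.Theory.
Ltac ifs := repeat (case: ifP => [?|/negbT ?]).
Local Open Scope ring_scope.

Lemma ordS_val K (l : 'I_K) : nat_of_ord (ordS l) = (if l.+1 < K then l.+1 else 0)%N.
Proof.
rewrite /=; case: ifP => h; first by rewrite modn_small.
have -> : l.+1 = K by have := ltn_ord l; lia.
by rewrite modnn.
Qed.

Lemma ord_pred_val K (l : 'I_K) : nat_of_ord (ord_pred l) = (if l == 0 :> nat then K.-1 else l.-1)%N.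
Proof.
rewrite /=; case: eqP => h.
  by rewrite h add0n modn_small //; have := ltn_ord l; lia.
have -> : ((l + K).-1 = l.-1 + K)%N by lia.
by rewrite modnDr modn_small //; have := ltn_ord l; lia.
Qed.

Lemma cdist_ordS K (l k : 'I_K) : k != l -> cdist (ordS l) k = (cdist l k).-1.
Proof.
move=> /eqP hkl; have hk := ltn_ord k; have hl := ltn_ord l.
have hkl' : (k : nat) <> l by move=> h; apply: hkl; apply: val_inj.
rewrite /cdist ordS_val; case: ltnP => ? /=; ifs; lia.
Qed.

Lemma cdist_lt K (l k : 'I_K) : (cdist l k < K)%N.
Proof. have := ltn_ord k; have := ltn_ord l; rewrite /cdist; ifs; lia. Qed.

Lemma cdist0 K (l k : 'I_K) : (cdist l k == 0)%N = (k == l).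
Proof.
have := ltn_ord k; have := ltn_ord l; rewrite /cdist -val_eqE /=.
move=> ? ?; ifs; apply/eqP/eqP; lia.
Qed.

Lemma cdist1 K (l t : 'I_K) : cdist l t = 1%N -> t = ordS l.
Proof.
have := ltn_ord t; have := ltn_ord l => h1 h2 h3.
apply: val_inj; move: h3; rewrite /= -[(l.+1 %% K)%N]/(nat_of_ord (ordS l)) ordS_val /cdist.
ifs; lia.
Qed.

Lemma cdist_pred K (l k : 'I_K) : k != l -> cdist l (ord_pred k) = (cdist l k).-1.
Proof.
move=> /eqP hkl; have hk := ltn_ord k; have hl := ltn_ord l.
have hkl' : (k : nat) <> l by move=> h; apply: hkl; apply: val_inj.
rewrite /cdist ord_pred_val; case: eqP => ? /=; ifs; lia.
Qed.

Lemma cdist_Sl K (l : 'I_K) : (1 < K)%N -> cdist (ordS l) l = K.-1.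
Proof.
move=> hK; have hl := ltn_ord l.
by rewrite /cdist ordS_val; case: (ltnP l.+1 K) => ? /=; ifs; lia.
Qed.

Lemma cdist_lS K (l : 'I_K) : (1 < K)%N -> cdist l (ordS l) = 1%N.
Proof.
move=> hK; have hl := ltn_ord l.
by rewrite /cdist ordS_val; case: (ltnP l.+1 K) => ? /=; ifs; lia.
Qed.

Lemma cdist_ll K (l : 'I_K) : cdist l l = 0%N.
Proof. by rewrite /cdist leqnn subnn. Qed.

Lemma cdist_inj K (l a b : 'I_K) : cdist l a = cdist l b -> a = b.
Proof.
have := ltn_ord a; have := ltn_ord b; have := ltn_ord l => ? ? ? h.
apply: val_inj => /=; move: h; rewrite /cdist; case: (leqP l a) => ?; case: (leqP l b) => ? h /=; lia.
Qed.

Section S.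
Variables (R : realType) (K d : nat) (eta : R) (n : 'I_K -> nat).
Variable x : forall k : 'I_K, 'I_(n k) -> 'rV[R]_d.
Variable phi : forall k : 'I_K, 'I_(n k) -> R.

Definition G (s u : 'I_K) (a : 'I_(n s)) (b : 'I_(n u)) : R :=
  phi a * Kmat eta x s u a b.
Definition FS (S : {set 'I_K}) (J : midx n) : R :=
  \prod_(s in S) G (J s) (J (ordS s)).
Definition agree (W : {set 'I_K}) (I J : midx n) : bool :=
  [forall k, (k \notin W) ==> (J k == I k)].
Definition upd (I : midx n) (s : 'I_K) (a : 'I_(n s)) : midx n :=
  @finfun _ (fun k => 'I_(n k)) (dfwith (fun k => I k) a).

Arguments upd I s a : clear implicits.
Lemma upd_in (I : midx n) (s : 'I_K) (a : 'I_(n s)) : upd I s a s = a.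
Proof. by rewrite ffunE dfwith_in. Qed.
Lemma upd_out (I : midx n) (s : 'I_K) (a : 'I_(n s)) (k : 'I_K) : s != k -> upd I s a k = I k.
Proof. by move=> h; rewrite ffunE dfwith_out. Qed.

Lemma agree0 (I : midx n) (f : midx n -> R) :
  \sum_(J | agree set0 I J) f J = f I.
Proof.
rewrite (big_pred1 I) // => J; apply/forallP/eqP => [h|->] /=.
  by apply/ffunP => k; apply/eqP; have := h k; rewrite inE.
by move=> k; rewrite eqxx implybT.
Qed.

Lemma sum_upd (W : {set 'I_K}) s (I : midx n) (f : midx n -> R) : s \notin W ->
  \sum_(J | agree (s |: W) I J) f J =
  \sum_(a : 'I_(n s)) \sum_(J | agree W (upd I s a) J) f J.
Proof.
move=> sW.
rewrite (partition_big (fun J : midx n => J s) predT) //=.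
apply: eq_bigr => a _; apply: eq_bigl => J.
apply/andP/forallP => [[/forallP h /eqP hs] k|h].
  apply/implyP => kW.
  case: (eqVneq s k) => [<-|sk]; first by rewrite upd_in hs.
  by rewrite upd_out //; apply: (implyP (h k)); rewrite !inE negb_or eq_sym sk.
split.
  apply/forallP => k; apply/implyP; rewrite !inE negb_or => /andP[sk kW'].
  by have := implyP (h k) kW'; rewrite upd_out // eq_sym.
by have := implyP (h s) sW; rewrite upd_in.
Qed.
Lemma fubini (A B : {set 'I_K}) (I : midx n) (f : midx n -> R) :
  [disjoint A & B] ->
  \sum_(J' | agree (A :|: B) I J') f J' =
  \sum_(J | agree B I J) \sum_(J' | agree A J J') f J'.
Proof.
move=> dAB.
rewrite (exchange_big_dep (fun J' => agree (A :|: B) I J')) /=; last first.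
  move=> J J' /forallP hB /forallP hA; apply/forallP => k; apply/implyP.
  rewrite inE negb_or => /andP[kA kB].
  by rewrite (eqP (implyP (hA k) kA)) (implyP (hB k) kB).
apply/esym/eq_bigr => J' /forallP hJ'.
pose mg : midx n := @finfun _ (fun k => 'I_(n k)) (fun k => if k \in A then I k else J' k).
rewrite (big_pred1 mg) // => J; apply/andP/eqP => [[/forallP hB /forallP hA]|->].
  apply/ffunP => k; rewrite ffunE; case: ifP => kA.
    have kB : k \notin B by rewrite (disjointFr dAB kA).
    exact/eqP/(implyP (hB k) kB).
  by apply/esym/eqP/(implyP (hA k)); rewrite kA.
split; apply/forallP => k; apply/implyP => hk; rewrite ffunE.
  case: ifP => // kA; apply: (implyP (hJ' k)); rewrite inE negb_or kA hk.
  done.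
by rewrite (negbTE hk).
Qed.
End S.
Arguments upd {K n} I s a.
Arguments agree {K n} W I J.

Section S3.
Variables (R : realType) (K d : nat) (eta : R) (n : 'I_K -> nat).
Variable x : forall k : 'I_K, 'I_(n k) -> 'rV[R]_d.
Variable phi : forall k : 'I_K, 'I_(n k) -> R.

Definition win (l : 'I_K) m := [set c : 'I_K | (0 < cdist l c < m)%N].
Definition arc (l : 'I_K) m := [set c : 'I_K | (cdist l c < m)%N].

Notation G := (G eta x phi).
Notation FS := (FS eta x phi).

Lemma DP_alpha m : forall (l t : 'I_K), cdist l t = m.+1 ->
  forall S : {set 'I_K}, arc l m.+1 \subset S -> forall I : midx n,
  \sum_(J | agree (win l m.+1) I J) FS S J =
  (\prod_(s in S :\: arc l m.+1) G (I s) (I (ordS s))) *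
  (phi (I l) * alphaF eta x phi m.+1 l t (I l) (I t)).
Proof.
elim: m => [|m IH] l t hlt S hS I.
  have -> : win l 1 = set0 by apply/setP => c; rewrite !inE; lia.
  rewrite agree0 /FS.
  have ht := cdist1 hlt; subst t.
  have lS : l \in S by apply: (subsetP hS); rewrite inE ltnS leqn0 cdist0.
  rewrite (bigD1 l) //= mulrC; congr (_ * _).
    apply: eq_bigl => s; rewrite !inE ltnS leqn0 cdist0.
    by rewrite andbC.
have htl : t != l by rewrite -cdist0 hlt.
have hl't := cdist_ordS htl; rewrite hlt /= in hl't.
have hKl := cdist_lt l t.
have hll' : ordS l != l.
  rewrite -val_eqE /= -[(l.+1 %% K)%N]/(nat_of_ord (ordS l)) ordS_val.
  by have := ltn_ord l; case: (ltnP l.+1 K) => ? /=; lia.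
have hK1 : (1 < K)%N by lia.
have hl'l := cdist_Sl l hK1.
have hwin : win l m.+2 = ordS l |: win (ordS l) m.+1.
  apply/setP => c; rewrite !inE.
  case: (eqVneq c l) => [->|hcl].
    by rewrite eq_sym (negbTE hll') hl'l cdist_ll; lia.
  case: (eqVneq c (ordS l)) => [->|hc]; first by rewrite cdist_lS.
  rewrite /= cdist_ordS //.
  have h0 : cdist l c != 0%N by rewrite cdist0.
  have h1 : cdist l c != 1%N by apply/eqP => /cdist1 /eqP; rewrite (negbTE hc).
  lia.
rewrite hwin sum_upd; last by rewrite inE cdist_ll.
have hsub : arc (ordS l) m.+1 \subset S.
  apply: subset_trans hS; apply/subsetP => c; rewrite !inE.
  case: (eqVneq c l) => [->|hcl]; first by rewrite cdist_ll.
  rewrite cdist_ordS //; lia.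
rewrite (eq_bigr _ (fun a _ => IH _ _ hl't _ hsub (upd I (ordS l) a))).
have hlt' : ordS l != t by rewrite eq_sym -cdist0 hl't.
have lS : l \in S :\: arc (ordS l) m.+1.
  rewrite !inE hl'l (subsetP hS) ?andbT; first lia.
  by rewrite inE cdist_ll.
have hP : forall a, \prod_(s in S :\: arc (ordS l) m.+1)
     G (upd I (ordS l) a s) (upd I (ordS l) a (ordS s)) =
   G (I l) a * \prod_(s in S :\: arc l m.+2) G (I s) (I (ordS s)).
  move=> a; rewrite (bigD1 l lS) upd_out // upd_in; congr (_ * _).
  apply: eq_big => s.
    rewrite !inE; case: (eqVneq s l) => [->|hsl]; first by rewrite cdist_ll; lia.
    change (pred_of_mem _ s) with (s \in S :\: arc (ordS l) m.+1).
    rewrite !inE cdist_ordS // andbT.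
    case: (s \in S) => //=; rewrite ?andbF ?andbT //.
    have h0 : cdist l s != 0%N by rewrite cdist0.
    by apply/negP/negP; lia.
  move=> /andP[hs1 hsl].
  have hs : ordS l != s.
    apply/eqP => hE; move: hs1; rewrite -hE.
    change (ordS l \in S :\: arc (ordS l) m.+1 -> False).
    by rewrite !inE cdist_ll.
  rewrite !upd_out //.
  by rewrite (inj_eq (@ordS_inj K)) eq_sym.
rewrite (eq_bigr _ (fun a _ => congr1 (fun z => z * _) (hP a))).
have hA : alphaF eta x phi m.+2 l t =
  Kmat eta x l (ordS l) *m rowscale (@phi (ordS l)) (alphaF eta x phi m.+1 (ordS l) t) by [].
rewrite hA !mxE mulr_sumr mulr_sumr; apply: eq_bigr => a _.
rewrite !mxE upd_in upd_out // /G !mxE; ring.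
Qed.
End S3.

Section S4.
Variables (R : realType) (K d : nat) (eta : R) (n : 'I_K -> nat).
Variable x : forall k : 'I_K, 'I_(n k) -> 'rV[R]_d.
Variable phi : forall k : 'I_K, 'I_(n k) -> R.
Notation G := (G eta x phi).
Notation FS := (FS eta x phi).

Lemma DP_lambda m : forall (l t : 'I_K), cdist l t = m.+1 ->
  forall S : {set 'I_K}, arc l m.+1 \subset S -> forall I : midx n,
  \sum_(J | agree (win l m.+1) I J) FS S J =
  (\prod_(s in S :\: arc l m.+1) G (I s) (I (ordS s))) *
  (phi (I l) * lambdaF eta x phi m.+1 l t (I l) (I t)).
Proof.
elim: m => [|m IH] l t hlt S hS I.
  have -> : win l 1 = set0 by apply/setP => c; rewrite !inE; lia.
  rewrite agree0 /FS.
  have ht := cdist1 hlt; subst t.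
  have lS : l \in S by apply: (subsetP hS); rewrite inE ltnS leqn0 cdist0.
  rewrite (bigD1 l) //= mulrC; congr (_ * _).
  apply: eq_bigl => s; rewrite !inE ltnS leqn0 cdist0.
  by rewrite andbC.
have htl : t != l by rewrite -cdist0 hlt.
have hlt' := cdist_pred htl; rewrite hlt /= in hlt'.
have hKl := cdist_lt l t.
have hK1 : (1 < K)%N by lia.
have htt : ord_pred t != t by apply/eqP => h; move: hlt'; rewrite h hlt; lia.
have htl' : ord_pred t != l by rewrite -cdist0 hlt'.
have hwin : win l m.+2 = ord_pred t |: win l m.+1.
  apply/setP => c; rewrite !inE.
  case: (eqVneq c (ord_pred t)) => [->|hc]; first by rewrite hlt'; lia.
  have : cdist l c != m.+1 by apply: contra_neq hc => h; apply: (@cdist_inj _ l); rewrite h hlt'.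
  rewrite /=; lia.
rewrite hwin sum_upd; last by rewrite inE hlt' ltnn andbF.
have hsub : arc l m.+1 \subset S.
  apply: subset_trans hS; apply/subsetP => c; rewrite !inE; lia.
rewrite (eq_bigr _ (fun a _ => IH _ _ hlt' _ hsub (upd I (ord_pred t) a))).
have tS : ord_pred t \in S :\: arc l m.+1.
  rewrite !inE hlt' ltnn (subsetP hS) //.
  by rewrite inE hlt'.
have hP : forall a, \prod_(s in S :\: arc l m.+1)
     G (upd I (ord_pred t) a s) (upd I (ord_pred t) a (ordS s)) =
   G a (I t) * \prod_(s in S :\: arc l m.+2) G (I s) (I (ordS s)).
  move=> a; rewrite (bigD1 (ord_pred t) tS) upd_in ord_predK upd_out 1?eq_sym //.
  congr (_ * _).
  apply: eq_big => s.
    change (pred_of_mem _ s) with (s \in S :\: arc l m.+1).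
    rewrite !inE; case: (eqVneq s (ord_pred t)) => [->|hst]; first by rewrite hlt' ltnn ltnSn andbF.
    have : cdist l s != m.+1 by apply: contra_neq hst => h; apply: (@cdist_inj _ l); rewrite h hlt'.
    rewrite /= andbT; case: (s \in S); rewrite ?andbF ?andbT //=; lia.
  move=> /andP[hs1 hst].
  rewrite !upd_out 1?eq_sym //.
  apply/eqP => hE.
  have hSl : ordS s != l by rewrite hE.
  have := cdist_pred hSl; rewrite ordSK hE hlt' /= => h.
  by move: hs1; change (s \in S :\: arc l m.+1 -> False); rewrite !inE h ltnSn.
  by rewrite eq_sym.
rewrite (eq_bigr _ (fun a _ => congr1 (fun z => z * _) (hP a))).
have hA : lambdaF eta x phi m.+2 l t =
  lambdaF eta x phi m.+1 l (ord_pred t) *m rowscale (@phi (ord_pred t)) (Kmat eta x (ord_pred t) t) by [].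
rewrite hA !mxE mulr_sumr mulr_sumr; apply: eq_bigr => a _.
rewrite !mxE upd_in upd_out // /G !mxE; ring.
Qed.
End S4.

Section S5.
Variables (R : realType) (K d : nat) (eta : R) (n : 'I_K -> nat).
Variable x : forall k : 'I_K, 'I_(n k) -> 'rV[R]_d.
Variable phi : forall k : 'I_K, 'I_(n k) -> R.

Lemma win_S m (l t : 'I_K) : cdist l t = m.+2 ->
  win l m.+2 = ordS l |: win (ordS l) m.+1.
Proof.
move=> hlt.
have hKl := cdist_lt l t.
have hK1 : (1 < K)%N by lia.
have hll' : ordS l != l.
  rewrite -val_eqE /= -[(l.+1 %% K)%N]/(nat_of_ord (ordS l)) ordS_val.
  by have := ltn_ord l; case: (ltnP l.+1 K) => ? /=; lia.
have hl'l := cdist_Sl l hK1.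
apply/setP => c; rewrite !inE.
case: (eqVneq c l) => [->|hcl].
  by rewrite eq_sym (negbTE hll') hl'l cdist_ll; lia.
case: (eqVneq c (ordS l)) => [->|hc]; first by rewrite cdist_lS.
rewrite /= cdist_ordS //.
have h0 : cdist l c != 0%N by rewrite cdist0.
have h1 : cdist l c != 1%N by apply/eqP => /cdist1 /eqP; rewrite (negbTE hc).
lia.
Qed.

Lemma win_P m (l t : 'I_K) : cdist l t = m.+2 ->
  win l m.+2 = ord_pred t |: win l m.+1.
Proof.
move=> hlt.
have htl : t != l by rewrite -cdist0 hlt.
have hlt' := cdist_pred htl; rewrite hlt /= in hlt'.
apply/setP => c; rewrite !inE.
case: (eqVneq c (ord_pred t)) => [->|hc]; first by rewrite hlt'; lia.
have : cdist l c != m.+1 by apply: contra_neq hc => h; apply: (@cdist_inj _ l); rewrite h hlt'.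
rewrite /=; lia.
Qed.

Lemma mulmx_empty p q r (A : 'M[R]_(p, q)) (B : 'M[R]_(q, r)) : q = 0%N -> A *m B = 0.
Proof.
move=> hq; apply/matrixP => a b; rewrite !mxE big1 // => c _.
by have := ltn_ord c; rewrite {2}hq.
Qed.

Lemma alpha_zero m : forall (l t : 'I_K), cdist l t = m.+1 ->
  forall s, s \in win l m.+1 -> n s = 0%N -> alphaF eta x phi m.+1 l t = 0.
Proof.
elim: m => [|m IH] l t hlt s.
  by rewrite inE; lia.
rewrite (win_S hlt) !inE => /orP[/eqP -> hs|hs hn].
  by apply: mulmx_empty.
have htl : t != l by rewrite -cdist0 hlt.
have hl't := cdist_ordS htl; rewrite hlt /= in hl't.
have -> : alphaF eta x phi m.+2 l t =
  Kmat eta x l (ordS l) *m rowscale (@phi (ordS l)) (alphaF eta x phi m.+1 (ordS l) t) by [].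
rewrite (IH _ _ hl't s _ hn); last by rewrite inE.
have -> : rowscale (@phi (ordS l)) (0 : 'M[R]_(n (ordS l), n t)) = 0.
  by apply/matrixP => a b; rewrite !mxE mulr0.
by rewrite mulmx0.
Qed.

Lemma lambda_zero m : forall (l t : 'I_K), cdist l t = m.+1 ->
  forall s, s \in win l m.+1 -> n s = 0%N -> lambdaF eta x phi m.+1 l t = 0.
Proof.
elim: m => [|m IH] l t hlt s.
  by rewrite inE; lia.
rewrite (win_P hlt) !inE => /orP[/eqP -> hs|hs hn].
  by apply: mulmx_empty.
have htl : t != l by rewrite -cdist0 hlt.
have hlt' := cdist_pred htl; rewrite hlt /= in hlt'.
have -> : lambdaF eta x phi m.+2 l t =
  lambdaF eta x phi m.+1 l (ord_pred t) *m rowscale (@phi (ord_pred t)) (Kmat eta x (ord_pred t) t) by [].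
by rewrite (IH _ _ hlt' s _ hn) ?mul0mx // inE.
Qed.
End S5.

Lemma eq_ordE K (a b : 'I_K) : (a == b) = (nat_of_ord a == nat_of_ord b)%N.
Proof. by []. Qed.

Lemma T_FS (R : realType) (K d : nat) (eta : R) (n : 'I_K -> nat)
  (x : forall k : 'I_K, 'I_(n k) -> 'rV[R]_d) (phi : forall k : 'I_K, 'I_(n k) -> R)
  (J : midx n) : Ktens eta x J * Phitens phi J = FS eta x phi setT J.
Proof.
rewrite /Ktens /Phitens /FS mulr_sumr expR_sum -big_split /=.
apply: eq_big => [s|s _]; first by rewrite inE.
by rewrite /G mxE mulrC.
Qed.

Lemma agree_C1 K (n : 'I_K -> nat) (k : 'I_K) (I J : midx n) :
  agree (~: [set k]) I J = (J k == I k).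
Proof.
apply/forallP/eqP => [h|h c]; first by have := h k; rewrite !inE eqxx /= => /eqP.
by apply/implyP; rewrite !inE negbK => /eqP ->; apply/eqP.
Qed.

Unset Implicit Arguments.
Set Strict Implicit.

Theorem theorem4 (R : realType) (K d : nat) (hK : (3 <= K)%N) (eta : R)
    (heta : 0 < eta) (n : 'I_K -> nat)
    (x : forall k : 'I_K, 'I_(n k) -> 'rV[R]_d)
    (phi : forall k : 'I_K, 'I_(n k) -> R)
    (o : 'I_K) (ho : nat_of_ord o = 0%N) :
  let T := fun I : midx n => Ktens eta x I * Phitens phi I in
  (forall i : 'I_(n o),
     marg T o i =
     phi o i * inner_rows (Kmat eta x o (ordS o))
                 (rowscale (phi (ordS o)) (alpha eta x phi (ordS o) o))^T i)
  /\
  (forall (k : 'I_K), k != o -> forall i : 'I_(n k),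
     marg T k i =
     phi k i * inner_rows (alpha eta x phi k o)
                 (rowscale (phi o) (lambda eta x phi o k))^T i).
Proof.
move=> T.
have hTF : forall J, T J = FS eta x phi setT J by move=> J; apply: T_FS.
have hK1 : (1 < K)%N by lia.
have vo' : nat_of_ord (ordS o) = 1%N by rewrite ordS_val ho; case: (ltnP 1 K) => ? /=; lia.
have ho' : ordS o != o by rewrite eq_ordE vo' ho.
have hm : cdist (ordS o) o = (K - 2)%N.+1.
  by rewrite /cdist vo' ho /=; lia.
have hset : ~: [set o] = ordS o |: win (ordS o) (K - 2)%N.+1.
  apply/setP => c; rewrite !inE !eq_ordE /cdist vo' ho.
  have hc := ltn_ord c; ifs; apply/idP/idP; lia.
have hS1 : setT :\: arc (ordS o) (K - 2)%N.+1 = [set o].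
  apply/setP => c; rewrite !inE !eq_ordE /cdist vo' ho.
  have hc := ltn_ord c; ifs; apply/idP/idP; lia.
split.
  move=> i; rewrite /marg (eq_bigr _ (fun J _ => hTF J)).
  case: (boolP [forall s, 0 < n s]%N) => [/forallP hpos | hneg].
    pose Ib : midx n := @finfun _ (fun s => 'I_(n s)) (fun s => Ordinal (hpos s)).
    pose I0 := upd Ib o i.
    rewrite (eq_bigl (fun J => agree (~: [set o]) I0 J)); last first.
      by move=> J; rewrite agree_C1 /I0 upd_in.
    rewrite hset sum_upd; last by rewrite inE cdist_ll.
    rewrite /inner_rows mulr_sumr; apply: eq_bigr => j _.
    rewrite (DP_alpha eta x phi hm); last by apply: subsetT.
    rewrite hS1 big_set1 upd_in upd_out // /I0 upd_in.
    rewrite /alpha hm !mxE /G !mxE; ring.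
  move/forallPn: hneg => -[s0 hs0]; have {}hs0 : n s0 = 0%N by lia.
  rewrite big1; last by move=> J _; case: (J s0) => c hc; exfalso; lia.
  have hno := ltn_ord i.
  have : s0 \in ~: [set o] by rewrite !inE; apply/eqP => e; rewrite e in hs0; lia.
  rewrite hset in_setU1 => /orP[/eqP e|hw].
    rewrite /inner_rows big1 ?mulr0 // => -[c hc] _; exfalso; rewrite e in hs0; lia.
  rewrite /alpha hm (alpha_zero eta x phi hm hw hs0) /inner_rows big1 ?mulr0 // => j _.
  by rewrite !mxE !mulr0.
move=> k hko i.
have vk : (0 < nat_of_ord k)%N by move: hko; rewrite eq_ordE ho => ?; lia.
have hk := ltn_ord k.
have hm1 : cdist k o = (K - k - 1)%N.+1.
  by rewrite /cdist ho ?leq0n /=; ifs; lia.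
have hm2 : cdist o k = (k - 1)%N.+1.
  by rewrite /cdist ho /=; lia.
set W1 := win k (K - k - 1)%N.+1.
set W2 := win o (k - 1)%N.+1.
have hA : ~: [set k] = o |: (W1 :|: W2).
  apply/setP => c; rewrite !inE !eq_ordE /cdist ho ?leq0n /=.
  have hc := ltn_ord c; ifs; apply/idP/idP; lia.
have hoW : o \notin W1 :|: W2.
  rewrite !inE /cdist ho ?leq0n /=; ifs; lia.
have hdis : [disjoint W1 & W2].
  rewrite -setI_eq0; apply/eqP/setP => c; rewrite !inE /cdist ho ?leq0n /=.
  have hc := ltn_ord c; ifs; lia.
have hkW2 : k \notin W2 by rewrite !inE /cdist ho ?leq0n /=; ifs; lia.
have hoW2 : o \notin W2 by rewrite !inE /cdist ho ?leq0n /=; ifs; lia.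
have hsub : arc o (k - 1)%N.+1 \subset setT :\: arc k (K - k - 1)%N.+1.
  apply/subsetP => c; rewrite !inE /cdist ho ?leq0n /=.
  have hc := ltn_ord c; ifs; lia.
have h0 : (setT :\: arc k (K - k - 1)%N.+1) :\: arc o (k - 1)%N.+1 = set0.
  apply/setP => c; rewrite !inE /cdist ho ?leq0n /=.
  have hc := ltn_ord c; ifs; lia.
rewrite /marg (eq_bigr _ (fun J _ => hTF J)).
case: (boolP [forall s, 0 < n s]%N) => [/forallP hpos | hneg].
  pose Ib : midx n := @finfun _ (fun s => 'I_(n s)) (fun s => Ordinal (hpos s)).
  pose I0 := upd Ib k i.
  rewrite (eq_bigl (fun J => agree (~: [set k]) I0 J)); last first.
    by move=> J; rewrite agree_C1 /I0 upd_in.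
  rewrite hA sum_upd //.
  rewrite /inner_rows mulr_sumr; apply: eq_bigr => j _.
  rewrite fubini //.
  have inner : forall J, agree W2 (upd I0 o j) J ->
      \sum_(J' | agree W1 J J') FS eta x phi setT J' =
      FS eta x phi (setT :\: arc k (K - k - 1)%N.+1) J *
        (phi k i * alphaF eta x phi (K - k - 1)%N.+1 k o i j).
    move=> J hJ; rewrite (DP_alpha eta x phi hm1 (subsetT _)).
    have Jk : J k = i.
      by rewrite (eqP (implyP (forallP hJ k) hkW2)) upd_out 1?eq_sym // upd_in.
    have Jo : J o = j.
      by rewrite (eqP (implyP (forallP hJ o) hoW2)) upd_in.
    by rewrite Jk Jo.
  rewrite (eq_bigr _ inner) -mulr_suml.
  have hok : o != k by rewrite eq_sym.
  rewrite (DP_lambda eta x phi hm2 hsub) h0 big_set0 mul1r upd_in (upd_out _ _ hok) /I0 upd_in.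
  rewrite /alpha /lambda hm1 hm2 !mxE; ring.
move/forallPn: hneg => -[s0 hs0]; have {}hs0 : n s0 = 0%N by lia.
rewrite big1; last by move=> J _; case: (J s0) => c hc; exfalso; lia.
have hnk := ltn_ord i.
have : s0 \in ~: [set k] by rewrite !inE; apply/eqP => e; rewrite e in hs0; lia.
rewrite hA in_setU1 in_setU => /orP[/eqP e|/orP[hw|hw]].
- rewrite /inner_rows big1 ?mulr0 // => -[c hc] _; exfalso; rewrite e in hs0; lia.
- rewrite /alpha hm1 (alpha_zero eta x phi hm1 hw hs0) /inner_rows big1 ?mulr0 // => j _.
  by rewrite !mxE !mul0r.
- rewrite /lambda hm2 (lambda_zero eta x phi hm2 hw hs0) /inner_rows big1 ?mulr0 // => j _.
  by rewrite !mxE !mulr0.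
Qed.
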